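(* Let $F$ be a minimally unsatisfiable clause-set and $F',F''\in\mathrm{sDP}(F)$. Then $n(F')=n(F'')$.
   Context: Literals are variables $v$ and complements $\overline{v}$; a clause is a finite set of literals with no complementary pair; a clause-set is a finite set of clauses; $n(F)$ is the number of variables occurring in $F$; $\mathrm{ldeg}_F(x)$ is the number of clauses of $F$ containing literal $x$. $\mathrm{DP}_v(F) := \{C \in F : v \notin \mathrm{var}(C)\} \cup \{(C \cup D)\setminus\{v,\overline{v}\} : C, D \in F,\ C \cap \overline{D} = \{v\}\}$. A variable $v$ is singular for $F$ if $\min(\mathrm{ldeg}_F(v),\mathrm{ldeg}_F(\overline{v}))=1$; $F$ is nonsingular if it has none. A singular DP-reduction step is $F\leadsto\mathrm{DP}_v(F)$ for minimally unsatisfiable $F$ and $v$ singular for $F$. $\mathrm{sDP}(F)$ is the set of nonsingular minimally unsatisfiable clause-sets obtainable from $F$ by zero or more singular DP-reduction steps. *)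

(* Defs.v *)
From mathcomp Require Import all_boot all_order finmap.
Set Implicit Arguments. Unset Strict Implicit. Unset Printing Implicit Defensive.
Local Open Scope fset_scope.

(* Variables are natural numbers; a literal is (v, true) for v and
   (v, false) for the complement of v. *)
Definition var := nat.
Definition lit := (nat * bool)%type.
Definition compl (x : lit) : lit := (x.1, ~~ x.2).
Definition pos (v : var) : lit := (v, true).
Definition neg (v : var) : lit := (v, false).

Definition clause := {fset lit}.
Definition clauseset := {fset clause}.

Definition wf_clause (C : clause) : bool := [forall x : C, compl (val x) \notin C].
Definition wf_clauseset (F : clauseset) : bool := [forall C : F, wf_clause (val C)].

Definition compl_clause (C : clause) : clause := [fset compl x | x in C].
Definition vars_clause (C : clause) : {fset nat} := [fset x.1 | x in C].
Definition vars (F : clauseset) : {fset nat} := \bigcup_(C <- F) vars_clause C.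

Definition nvars (F : clauseset) : nat := #|` vars F|.

Definition ldeg (F : clauseset) (x : lit) : nat := #|` [fset C in F | x \in C]|.

Definition lit_true (f : nat -> bool) (x : lit) : bool := f x.1 == x.2.
Definition satisfies (f : nat -> bool) (F : clauseset) : Prop :=
  forall C, C \in F -> exists2 x, x \in C & lit_true f x.
Definition satisfiable (F : clauseset) : Prop := exists f, satisfies f F.

Definition minimally_unsat (F : clauseset) : Prop :=
  ~ satisfiable F /\ forall G : clauseset, G `<` F -> satisfiable G.

Definition DP (v : var) (F : clauseset) : clauseset :=
  [fset C in F | v \notin vars_clause C] `|`
  [fset (C `|` D) `\` [fset pos v; neg v] | C in F, D in F
     & C `&` compl_clause D == [fset pos v]].

Definition singular (F : clauseset) (v : var) : Prop :=
  minn (ldeg F (pos v)) (ldeg F (neg v)) = 1.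

Definition nonsingular (F : clauseset) : Prop := forall v, ~ singular F v.

Inductive sDP_reach : clauseset -> clauseset -> Prop :=
| sDP_refl F : sDP_reach F F
| sDP_step F v G : minimally_unsat F -> singular F v ->
    sDP_reach (DP v F) G -> sDP_reach F G.

Definition in_sDP (F G : clauseset) : Prop :=
  sDP_reach F G /\ nonsingular G /\ minimally_unsat G.

(* Main.v *)
Require Import Defs.
From mathcomp Require Import all_boot all_order finmap.
From Stdlib Require Import Classical.
Set Implicit Arguments. Unset Strict Implicit. Unset Printing Implicit Defensive.
Local Open Scope fset_scope.

Definition res (X Y : clause) (p : lit) : clause := (X `|` Y) `\` [fset p; compl p].
Definition upd (f : nat -> bool) (v : nat) (b : bool) : nat -> bool :=
  fun n => if n == v then b else f n.

Lemma complK (x : lit) : compl (compl x) = x.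
Proof. by case: x => a b; rewrite /compl /= negbK. Qed.

Lemma compl_neq (x : lit) : (x == compl x) = false.
Proof. by case: x => a b; rewrite /compl xpair_eqE eqxx /=; case: b. Qed.

Lemma compl_inj (x y : lit) : (compl x == compl y) = (x == y).
Proof. case: x y => a b [c d]; rewrite /compl !xpair_eqE /=.
by case: b; case: d. Qed.

Lemma lit_var_eq (t x : lit) : t.1 = x.1 -> t = x \/ t = compl x.
Proof. case: t x => a b [c d] /= ->. rewrite /compl /=.
by case: b; case: d; auto. Qed.

Lemma neq_var (t x : lit) : t.1 != x.1 -> (t == x) = false /\ (t == compl x) = false.
Proof. move=> H; split; apply/eqP=> E; move: H; rewrite E ?eqxx //. Qed.

Lemma lit_true_compl f x : lit_true f (compl x) = ~~ lit_true f x.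
Proof. case: x => a b; rewrite /lit_true /compl /=. by case: (f a); case: b. Qed.

Lemma lit_true_upd f v b t : t.1 != v -> lit_true (upd f v b) t = lit_true f t.
Proof. by move=> H; rewrite /lit_true /upd (negbTE H). Qed.

Lemma inP' (F : clauseset) (p : lit) K :
  K \in [fset C in F | p \in C] = (K \in F) && (p \in K).
Proof. by rewrite !inE. Qed.

Lemma vars_clauseP v K : reflect (exists b, (v, b) \in K) (v \in vars_clause K).
Proof.
apply: (iffP idP) => [/imfsetP [t tK ->]|[b H]]; last by apply/imfsetP; exists (v, b).
by exists t.2; case: t tK.
Qed.

Lemma var_in (t : lit) K : t \in K -> t.1 \in vars_clause K.
Proof. by move=> H; apply/vars_clauseP; exists t.2; case: t H. Qed.

Lemma varsP v F : reflect (exists2 K, K \in F & v \in vars_clause K) (v \in vars F).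
Proof.
apply: (iffP idP).
  by move=> /bigfcupP [K /andP[H _] H2]; exists K.
by move=> [K H H2]; apply/bigfcupP; exists K; rewrite ?H.
Qed.

Lemma sat_sub (G H : clauseset) : G `<=` H -> satisfiable H -> satisfiable G.
Proof. move=> /fsubsetP S [f Hf]; exists f => C /S; exact: Hf. Qed.

Lemma MU_wf F : minimally_unsat F -> forall K t, K \in F -> t \in K -> compl t \notin K.
Proof.
move=> [U M] K t KF tK; apply/negP => ctK.
have : F `\ K `<` F.
  rewrite fproperEneq fsubDset fsubsetUr andbT; apply/eqP => E.
  by have := KF; rewrite -E fsetD11.
move/M => [f Hf]; apply: U; exists f => C CF.
case: (eqVneq C K) => [->|ne].
  case E: (lit_true f t); first by exists t.
  by exists (compl t); rewrite // lit_true_compl E.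
by apply: Hf; apply/fsetD1P.
Qed.

Lemma MU_minus F D : minimally_unsat F -> D \in F ->
  exists f, (forall K, K \in F -> K != D -> exists2 t, t \in K & lit_true f t)
            /\ (forall t, t \in D -> ~~ lit_true f t).
Proof.
move=> [U M] DF.
have : F `\ D `<` F.
  rewrite fproperEneq fsubDset fsubsetUr andbT; apply/eqP => E.
  by have := DF; rewrite -E fsetD11.
move/M => [f Hf]; exists f; split.
  by move=> K KF ne; apply: Hf; apply/fsetD1P.
move=> t tD; apply/negP => tt; apply: U; exists f => C CF.
case: (eqVneq C D) => [->|ne]; first by exists t.
by apply: Hf; apply/fsetD1P.
Qed.

Definition uniq_in (F : clauseset) (x : lit) (C : clause) :=
  [/\ C \in F, x \in C & forall K, K \in F -> x \in K -> K = C].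

Lemma flip F C D x f : minimally_unsat F -> uniq_in F x C -> D \in F -> compl x \in D ->
  (forall K, K \in F -> K != D -> exists2 t, t \in K & lit_true f t) ->
  (forall t, t \in D -> ~~ lit_true f t) ->
  forall t, t \in C -> t != x -> lit_true f t -> False.
Proof.
move=> MU [CF xC uC] DF xD Hf Hn t tC tx tt.
have wf := MU_wf MU.
case: (MU) => U _; apply: U; exists (upd f x.1 (~~ x.2)) => K KF.
case: (eqVneq K D) => [->|ne].
  by exists (compl x) => //; rewrite /lit_true /upd eqxx /compl.
have [t' t'K t't] := Hf K KF ne.
case: (eqVneq t'.1 x.1) => [e|ne1]; last by exists t'; rewrite ?lit_true_upd.
case: (lit_var_eq e) => et'.
  rewrite et' in t'K; have eK := uC K KF t'K; subst K.
  exists t => //; rewrite lit_true_upd //; apply/negP => /eqP e2.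
  case: (lit_var_eq e2) => e3; first by rewrite e3 eqxx in tx.
  by move: (wf C x CF xC); rewrite -e3 tC.
by rewrite et' in t't; move: (Hn _ xD); rewrite t't.
Qed.

Lemma noclash F C D x z : minimally_unsat F -> uniq_in F x C -> D \in F -> compl x \in D ->
  z \in C -> compl z \in D -> z = x.
Proof.
move=> MU UC DF xD zC zD; apply/eqP/negPn/negP => zx.
have [f [H1 H2]] := MU_minus MU DF.
apply: (flip MU UC DF xD H1 H2 zC zx).
by move: (H2 _ zD); rewrite lit_true_compl negbK.
Qed.

Lemma in_compl_clause z D : (z \in compl_clause D) = (compl z \in D).
Proof.
apply/imfsetP/idP => [[d dD ->]|H]; first by rewrite complK.
by exists (compl z); rewrite ?complK.
Qed.

Lemma in_res z X Y p : (z \in res X Y p) = [&& z != p, z != compl p & (z \in X) || (z \in Y)].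
Proof. by rewrite /res !inE negb_or andbA. Qed.

Lemma res_new F C D x K : minimally_unsat F -> uniq_in F x C -> D \in F -> compl x \in D ->
  K \in F -> x.1 \notin vars_clause K -> res C D x != K.
Proof.
move=> MU UC DF xD KF nK; apply/eqP => E.
have [f [H1 H2]] := MU_minus MU DF.
have KD : K != D by apply/eqP => e; move: nK; rewrite e; have := var_in xD; rewrite /= => ->.
have [t tK tt] := H1 K KF KD.
move: tK; rewrite -E in_res => /and3P [tx _ /orP [tC|tD]].
  exact: (flip MU UC DF xD H1 H2 tC tx tt).
by move: (H2 t tD); rewrite tt.
Qed.

Lemma res_inj F C D1 D2 x : minimally_unsat F -> uniq_in F x C -> D1 \in F -> compl x \in D1 ->
  D2 \in F -> compl x \in D2 -> res C D1 x = res C D2 x -> D1 = D2.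
Proof.
move=> MU UC D1F x1 D2F x2 E; apply/eqP/negPn/negP => ne.
have [f [H1 H2]] := MU_minus MU D1F.
have ne' : D2 != D1 by rewrite eq_sym.
have [t tD tt] := H1 D2 D2F ne'.
have tx1 : t != compl x by apply/eqP => e; move: (H2 _ x1); rewrite -e tt.
have tx : t != x.
  by apply/eqP => e; move: (MU_wf MU D2F tD); rewrite e x2.
have : t \in res C D2 x by rewrite in_res tx tx1 tD orbT.
rewrite -E in_res => /and3P [_ _ /orP [tC|tD1]].
  exact: (flip MU UC D1F x1 H1 H2 tC tx tt).
by move: (H2 t tD1); rewrite tt.
Qed.

Lemma pair_pn (p : lit) : [fset pos p.1; neg p.1] = [fset p; compl p].
Proof.
case: p => v [|]; rewrite /pos /neg /compl //=.
by apply/fsetP => z; rewrite !inE orbC.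
Qed.

Lemma DPchar F p X0 K : minimally_unsat F -> uniq_in F p X0 ->
  K \in DP p.1 F <-> (K \in F /\ p.1 \notin vars_clause K) \/
                     exists2 Y, (Y \in F) && (compl p \in Y) & K = res X0 Y p.
Proof.
move=> MU UX; have [X0F pX0 uX] := UX.
rewrite /DP in_fsetU; split.
  case/orP => [|/imfset2P [C CF [D]]].
    by rewrite !inE => /andP [H1 H2]; left.
  rewrite !inE /= => /andP [DF /eqP Hc] ->.
  have : pos p.1 \in C `&` compl_clause D by rewrite Hc inE.
  rewrite in_fsetI in_compl_clause => /andP [pC nD].
  right; clear Hc; case: p UX pX0 uX pC nD => v [] UX pX0 uX pC nD.
    exists D; first by rewrite DF.
    by rewrite (uX C CF pC) /res -pair_pn.
  exists C; first by rewrite CF.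
  by rewrite (uX D DF nD) /res -pair_pn fsetUC.
case => [[KF Kv]|[Y /andP [YF pY] ->]].
  by apply/orP; left; rewrite !inE KF.
apply/orP; right; apply/imfset2P.
case: p UX pX0 uX pY => v [] UX pX0 uX pY.
  exists X0; first by [].
  exists Y; last by rewrite /res -pair_pn.
  rewrite !inE /= YF /=; apply/eqP/fsetP => z.
  rewrite in_fsetI in_compl_clause !inE.
  apply/andP/eqP => [[zX zY]|->]; first exact: (noclash MU UX YF pY zX zY).
  by split.
exists Y; first by [].
exists X0; last by rewrite /res -pair_pn fsetUC.
rewrite !inE /= X0F /=; apply/eqP/fsetP => z.
rewrite in_fsetI in_compl_clause !inE.
apply/andP/eqP => [[zY zX]|->]; last by split.
have := noclash MU UX YF pY zX; rewrite complK => /(_ zY) e.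
by rewrite -(complK z) e.
Qed.

Lemma var_neq (t p : lit) : t != p -> t != compl p -> t.1 != p.1.
Proof. move=> h1 h2; apply/eqP => e; case: (lit_var_eq e) => e2; by rewrite e2 eqxx in h1 h2. Qed.

Lemma sat_res F X Y p f : minimally_unsat F -> X \in F -> Y \in F -> p \in X -> compl p \in Y ->
  (exists2 t, t \in X & lit_true f t) -> (exists2 t, t \in Y & lit_true f t) ->
  exists2 t, t \in res X Y p & lit_true f t.
Proof.
move=> MU XF YF pX pY [t tX tt] [t' tY t't].
have wf := MU_wf MU.
case: (eqVneq t p) => [e|tp].
  exists t'; last by [].
  rewrite in_res tY orbT andbT; apply/andP; split.
    by apply/eqP => e2; move: (wf _ _ YF pY); rewrite complK -e2 tY.
  by apply/eqP => e2; move: t't; rewrite e2 lit_true_compl -e tt.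
exists t; last by [].
rewrite in_res tX tp !andbT /=; apply/eqP => e2; by move: (wf _ _ XF pX); rewrite -e2 tX.
Qed.

Lemma vars_lit v K : v \in vars_clause K -> pos v \in K \/ neg v \in K.
Proof. by move/vars_clauseP => [[] H]; [left|right]. Qed.

Lemma var_p_lit (p : lit) K : p.1 \in vars_clause K -> p \in K \/ compl p \in K.
Proof.
move/vars_clauseP => [b H]; case: (lit_var_eq (t:=(p.1,b)) (x:=p) erefl) => e.
  by left; rewrite -e.
by right; rewrite -e.
Qed.

Lemma DP_unsat F p X0 : minimally_unsat F -> uniq_in F p X0 -> ~ satisfiable (DP p.1 F).
Proof.
move=> MU UX [f Hf]; have [X0F pX0 uX] := UX.
have wf := MU_wf MU.
case: (MU) => U _; apply: U.
have Gin := fun K => proj2 (DPchar K MU UX).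
have noV : forall K, K \in F -> p.1 \notin vars_clause K -> exists2 t, t \in K & lit_true f t /\ t.1 != p.1.
  move=> K KF nK; have [t tK tt] := Hf K (Gin K (or_introl (conj KF nK))).
  exists t => //; split => //; apply/eqP => e; move: nK; rewrite -e (var_in tK).
  done.
case: (classic (exists2 t, t \in X0 & (t != p) && lit_true f t)) => [[t tX /andP[tp tt]]|NT].
  exists (upd f p.1 (~~ p.2)) => K KF.
  case: (boolP (p.1 \in vars_clause K)) => [/var_p_lit [pK|cK]|nK].
    rewrite (uX K KF pK); exists t => //; rewrite lit_true_upd //.
    apply: var_neq => //; apply/eqP => e; move: (wf _ _ X0F pX0); by rewrite -e tX.
    by exists (compl p) => //; rewrite /lit_true /upd eqxx.
  by have [t' t'K [t't t'v]] := noV K KF nK; exists t'; rewrite ?lit_true_upd.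
exists (upd f p.1 p.2) => K KF.
case: (boolP (p.1 \in vars_clause K)) => [/var_p_lit [pK|cK]|nK].
    by exists p => //; rewrite /lit_true /upd eqxx.
  have [t] := Hf _ (Gin (res X0 K p) (or_intror (ex_intro2 _ _ K (introT andP (conj KF cK)) erefl))).
  rewrite in_res => /and3P [tp tc /orP [tX|tK]] tt.
    by case: NT; exists t => //; rewrite tp.
  by exists t => //; rewrite lit_true_upd //; apply: var_neq.
by have [t' t'K [t't t'v]] := noV K KF nK; exists t'; rewrite ?lit_true_upd.
Qed.

Lemma proper_witness (A B : clauseset) : A `<` B -> exists2 R, R \in B & A `<=` B `\ R.
Proof.
rewrite fproperEneq => /andP [ne sub].
have : ~~ (B `<=` A) by apply: contra ne => h; rewrite eqEfsubset sub h.
move/fsubsetPn => [R RB RA]; exists R => //.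
by rewrite fsubsetD1 sub RA.
Qed.

Lemma DP_MU F p X0 : minimally_unsat F -> uniq_in F p X0 -> minimally_unsat (DP p.1 F).
Proof.
move=> MU UX; split; first exact: DP_unsat MU UX.
have [X0F pX0 uX] := UX; have wf := MU_wf MU.
move=> G' /proper_witness [R RG sub]; apply: (sat_sub sub).
have X0v : p.1 \in vars_clause X0 by apply: var_in.
case/(DPchar R MU UX): RG => [[RF Rv]|[Y0 /andP[Y0F pY0] ER]].
  have [f [H1 H2]] := MU_minus MU RF.
  exists f => K /fsetD1P [KR /(DPchar K MU UX)] [[KF _]|[Y /andP[YF pY] ->]].
    exact: H1.
  apply: (sat_res (F:=F)) => //; apply: H1 => //; apply/eqP => e; move: Rv; rewrite -e.
    by rewrite X0v.
  by rewrite (var_in pY).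
have [f [H1 H2]] := MU_minus MU Y0F.
exists f => K /fsetD1P [KR /(DPchar K MU UX)] [[KF Kv]|[Y /andP[YF pY] EK]].
  apply: H1 => //; apply/eqP => e; move: Kv; by rewrite e (var_in pY0).
rewrite EK; apply: (sat_res (F:=F)) => //; apply: H1 => //.
  apply/eqP => e; move: (wf _ _ X0F pX0); by rewrite e pY0.
by apply/eqP => e; move: KR; rewrite EK ER e eqxx.
Qed.

Definition sing_lit (F : clauseset) (p : lit) :=
  (exists C, uniq_in F p C) /\ exists2 K, K \in F & compl p \in K.

Lemma ldeg1P (F : clauseset) (p : lit) : ldeg F p = 1 <-> exists C, uniq_in F p C.
Proof.
split.
  move/eqP/cardfs1P => [C E].
  have : C \in [fset K in F | p \in K] by rewrite E inE.
  rewrite inP' => /andP [CF pC]; exists C; split => // K KF pK.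
  have : K \in [fset K in F | p \in K] by rewrite inP' KF pK.
  by rewrite E => /fset1P.
move=> [C [CF pC uC]]; apply/eqP/cardfs1P; exists C; apply/fsetP => K.
rewrite inP' inE; apply/andP/eqP => [[KF pK]|->]; first exact: uC.
by [].
Qed.

Lemma ldeg_pos (F : clauseset) (p : lit) : (0 < ldeg F p)%N <-> exists2 K, K \in F & p \in K.
Proof.
rewrite /ldeg cardfs_gt0; split.
  by move/fset0Pn => [K]; rewrite inP' => /andP [? ?]; exists K.
by move=> [K KF pK]; apply/fset0Pn; exists K; rewrite inP' KF pK.
Qed.

Lemma ldeg_ge2 (F : clauseset) (p : lit) (K1 K2 : clause) : K1 \in F -> K2 \in F -> p \in K1 -> p \in K2 -> K1 != K2 ->
  (1 < ldeg F p)%N.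
Proof.
move=> H1 H2 p1 p2 ne.
have : [fset K1; K2] `<=` [fset K in F | p \in K].
  by apply/fsubsetP => K; rewrite !inE => /orP [] /eqP ->; rewrite ?H1 ?H2 ?p1 ?p2.
by move/fsubset_leq_card; rewrite cardfs2 ne.
Qed.

Lemma compl_pos v : compl (pos v) = neg v. Proof. by []. Qed.
Lemma compl_neg v : compl (neg v) = pos v. Proof. by []. Qed.

Lemma singularP (F : clauseset) v : singular F v <-> exists p, p.1 = v /\ sing_lit F p.
Proof.
rewrite /singular /sing_lit; split.
  move=> E.
  case: (leqP (ldeg F (pos v)) (ldeg F (neg v))) => h.
    move: E; rewrite (minn_idPl h) => E.
    exists (pos v); split => //; split; first by apply/ldeg1P.
    by apply/ldeg_pos; rewrite compl_pos -E.
  move: E; rewrite (minn_idPr (ltnW h)) => E.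
  exists (neg v); split => //; split; first by apply/ldeg1P.
  by apply/ldeg_pos; rewrite compl_neg; apply: leq_trans h; rewrite E.
move=> [[v' b] [/= -> [/ldeg1P E /ldeg_pos H]]].
case: b E H => E H.
  by rewrite -/(pos v) E; move: H; rewrite compl_pos; case: (ldeg F (neg v)) => [|[|k]].
by rewrite -/(neg v) E; move: H; rewrite compl_neg; case: (ldeg F (pos v)) => [|[|k]].
Qed.

Lemma not_singular2 (F : clauseset) (p : lit) : (1 < ldeg F p)%N -> (1 < ldeg F (compl p))%N -> ~ singular F p.1.
Proof.
move=> h1 h2 /singularP [q [e [/ldeg1P E _]]].
case: (lit_var_eq e) => e2.
  by move: h1; rewrite -e2 E.
by move: h2; rewrite -e2 E.
Qed.

Lemma not_singular0 (F : clauseset) v : (forall K, K \in F -> v \notin vars_clause K) -> ~ singular F v.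
Proof.
move=> H /singularP [q [e [[C [CF qC _]] _]]].
by move: (H C CF); rewrite -e (var_in qC).
Qed.

Section Struct.
Variables (F : clauseset) (x : lit) (C : clause).
Hypothesis MU : minimally_unsat F.
Hypothesis UC : uniq_in F x C.
Let G := DP x.1 F.

Lemma G_keep K : K \in F -> x.1 \notin vars_clause K -> K \in G.
Proof. by move=> KF Kv; apply/(DPchar K MU UC); left. Qed.

Lemma G_res Y : Y \in F -> compl x \in Y -> res C Y x \in G.
Proof. by move=> YF cY; apply/(DPchar _ MU UC); right; exists Y; rewrite ?YF ?cY. Qed.

Lemma G_inv K : K \in G -> (K \in F /\ x.1 \notin vars_clause K) \/
                     exists2 Y, (Y \in F) && (compl x \in Y) & K = res C Y x.
Proof. by move/(DPchar K MU UC). Qed.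

Lemma xC : x \in C. Proof. by case: UC. Qed.
Lemma CF : C \in F. Proof. by case: UC. Qed.

Lemma novar_res Y : x.1 \notin vars_clause (res C Y x).
Proof.
apply/negP => /var_p_lit []; by rewrite in_res eqxx ?andbF.
Qed.

Lemma G_novar K : K \in G -> x.1 \notin vars_clause K.
Proof. by case/G_inv => [[]|[Y _ ->]] //; apply: novar_res. Qed.

Lemma lit_in_res t Y : t.1 != x.1 -> (t \in res C Y x) = (t \in C) || (t \in Y).
Proof.
move=> h; have [h1 h2] := neq_var h.
by rewrite in_res h1 h2.
Qed.

Lemma vars_G (Y0 : clause) : Y0 \in F -> compl x \in Y0 -> vars G = vars F `\ x.1.
Proof.
move=> Y0F cY0; apply/fsetP => u; rewrite in_fsetD1; apply/idP/idP.
  move/varsP => [K KG /vars_clauseP [b tK]].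
  case/G_inv: KG tK => [[KF Kv]|[Y /andP[YF cY] ->]] tK.
    apply/andP; split; last by apply/varsP; exists K => //; apply: (var_in tK).
    by apply/eqP => e; move: Kv; rewrite -e (var_in tK).
  move: tK; rewrite in_res => /and3P [t1 t2 /orP [tC|tY]].
    apply/andP; split; first exact: (var_neq t1 t2).
    by apply/varsP; exists C; [exact: CF|exact: (var_in tC)].
  apply/andP; split; first exact: (var_neq t1 t2).
  by apply/varsP; exists Y; [|exact: (var_in tY)].
move=> /andP [uv /varsP [K KF /vars_clauseP [b tK]]].
apply/varsP.
have tv : (u, b).1 != x.1 by [].
case: (boolP (x.1 \in vars_clause K)) => [/var_p_lit [xK|cK]|Kv].
- have eK : K = C by case: UC => _ _ h; apply: h.
  subst K; exists (res C Y0 x); first exact: G_res.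
  by apply/vars_clauseP; exists b; rewrite lit_in_res // tK.
- exists (res C K x); first exact: G_res.
  by apply/vars_clauseP; exists b; rewrite lit_in_res // tK orbT.
- by exists K; [apply: G_keep|apply/vars_clauseP; exists b].
Qed.

Lemma keep_sing p Cp : p.1 != x.1 -> uniq_in F p Cp -> Cp != C ->
  (exists2 Y0, Y0 \in F & compl x \in Y0) ->
  (exists2 K, K \in F & compl p \in K) -> sing_lit G p.
Proof.
move=> pv [CpF pCp uCp] ne [Y0 Y0F cY0] [K0 K0F cK0].
have [h1 h2] := neq_var pv.
have [cpv1 cpv2] : (compl p == x) = false /\ (compl p == compl x) = false.
  apply: neq_var; by case: p pv {uCp pCp cK0 h1 h2}.
have xCp : x \notin Cp.
  by apply/negP => xCp; move: ne; case: UC => _ _ h; rewrite (h Cp CpF xCp) eqxx.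
split.
  case: (boolP (compl x \in Cp)) => cCp.
    exists (res C Cp x); split; first exact: G_res.
      by rewrite lit_in_res // pCp orbT.
    move=> K KG pK; case/G_inv: KG pK => [[KF Kv] pK|[Y /andP[YF cY] ->]].
      by move: Kv; rewrite (uCp K KF pK) (var_in cCp).
    rewrite lit_in_res // => /orP [pC|pY].
      by move: ne; rewrite (uCp C CF pC) eqxx.
    by rewrite (uCp Y YF pY).
  have Cpv : x.1 \notin vars_clause Cp.
    by apply/negP => /var_p_lit []; [apply/negP|apply/negP].
  exists Cp; split; first exact: G_keep.
    by [].
  move=> K KG pK; case/G_inv: KG pK => [[KF Kv] pK|[Y /andP[YF cY] ->]].
    exact: uCp.
  rewrite lit_in_res // => /orP [pC|pY].
    by move: ne; rewrite (uCp C CF pC) eqxx.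
  by move: cCp; rewrite -(uCp Y YF pY) cY.
case: (boolP (x.1 \in vars_clause K0)) => [/var_p_lit [xK|cK]|Kv].
- have eK : K0 = C by case: UC => _ _ h; apply: h.
  subst K0; exists (res C Y0 x); first exact: G_res.
  by rewrite in_res cpv1 cpv2 cK0.
- exists (res C K0 x); first exact: G_res.
  by rewrite in_res cpv1 cpv2 cK0 orbT.
- by exists K0; [apply: G_keep|].
Qed.

Lemma back_sing p : p.1 != x.1 -> p \notin C -> sing_lit G p ->
  exists Cp, [/\ uniq_in F p Cp, Cp != C & exists2 K, K \in F & compl p \in K].
Proof.
move=> pv pC [[X' [X'G pX' uX']] [K' K'G cK']].
have [h1 h2] := neq_var pv.
have [cpv1 cpv2] : (compl p == x) = false /\ (compl p == compl x) = false.
  apply: neq_var; by case: p pv pC {uX' pX' cK' h1 h2}.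
have ex2 : exists2 K, K \in F & compl p \in K.
  case/G_inv: K'G cK' => [[KF _] cK|[Y /andP[YF _] ->]]; first by exists K'.
  rewrite in_res cpv1 cpv2 /= => /orP [cC|cY]; first by exists C => //; exact: CF.
  by exists Y.
have key : forall K, K \in F -> p \in K -> K != C /\ (forall Cp, (Cp \in F) && (p \in Cp) ->
        (X' = Cp /\ x.1 \notin vars_clause Cp) \/ (compl x \in Cp /\ X' = res C Cp x) -> K = Cp).
  move=> K KF pK; split; first by apply/eqP => e; move: pC; rewrite -e pK.
  move=> Cp /andP [CpF pCp] [[e1 Cpv]|[cCp e1]].
    case: (boolP (x.1 \in vars_clause K)) => [/var_p_lit [xK|cK]|Kv].
    + by move: pC; case: UC => _ _ h; rewrite -(h K KF xK) pK.
    + have := uX' _ (G_res KF cK); rewrite lit_in_res // pK orbT => /(_ erefl) e2.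
      by move: (res_new MU UC KF cK CpF Cpv); rewrite e2 e1 eqxx.
    + by rewrite -e1; apply: uX' => //; apply: G_keep.
  case: (boolP (x.1 \in vars_clause K)) => [/var_p_lit [xK|cK]|Kv].
  + by move: pC; case: UC => _ _ h; rewrite -(h K KF xK) pK.
  + have := uX' _ (G_res KF cK); rewrite lit_in_res // pK orbT => /(_ erefl) e2.
    by apply: (res_inj MU UC KF cK CpF cCp); rewrite e2 e1.
  + have e2 := uX' _ (G_keep KF Kv) pK.
    by move: (res_new MU UC CpF cCp KF Kv); rewrite -e1 e2 eqxx.
case/G_inv: (X'G) => [[X'F X'v]|[Y /andP[YF cY] eX]].
  exists X'; split => //; last by have [] := key X' X'F pX'.
  split => // K KF pK; have [_ h] := key K KF pK; apply: h; first by rewrite X'F pX'.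
  by left.
have pY : p \in Y by move: pX'; rewrite eX lit_in_res // (negbTE pC).
exists Y; split => //; last by have [] := key Y YF pY.
split => // K KF pK; have [_ h] := key K KF pK; apply: h; first by rewrite YF pY.
by right.
Qed.

Lemma two_in_G p D1 D2 : p \in C -> p.1 != x.1 -> D1 \in F -> D2 \in F ->
  compl x \in D1 -> compl x \in D2 -> D1 != D2 -> (1 < ldeg G p)%N.
Proof.
move=> pC pv D1F D2F c1 c2 ne.
apply: (ldeg_ge2 (K1 := res C D1 x) (K2 := res C D2 x)).
- exact: G_res.
- exact: G_res.
- by rewrite lit_in_res // pC.
- by rewrite lit_in_res // pC.
- by apply: contra ne => /eqP e; apply/eqP; apply: (res_inj MU UC).
Qed.

End Struct.

Lemma novarP (p : lit) K : (p.1 \notin vars_clause K) = (p \notin K) && (compl p \notin K).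
Proof.
apply/idP/andP => [H|[h1 h2]].
  by split; apply: contra H => h; [exact: (var_in h)|have := var_in h; rewrite /=].
by apply/negP => /var_p_lit []; apply/negP.
Qed.

Section Struct2.
Variables (F : clauseset) (x : lit) (C : clause).
Hypothesis MU : minimally_unsat F.
Hypothesis UC : uniq_in F x C.
Let G := DP x.1 F.

Lemma keep_uniq1 p Cp : p.1 != x.1 -> uniq_in F p Cp -> Cp != C -> compl x \notin Cp ->
  uniq_in G p Cp.
Proof.
move=> pv [CpF pCp uCp] ne cCp.
have [h1 h2] := neq_var pv.
have xCp : x \notin Cp.
  by apply/negP => xCp; move: ne; case: UC => _ _ h; rewrite (h Cp CpF xCp) eqxx.
split.
- by apply: (G_keep MU UC) => //; rewrite novarP xCp cCp.
- by [].
move=> K KG pK; case/(G_inv MU UC): KG pK => [[KF Kv] pK|[Y /andP[YF cY] ->]].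
  exact: uCp.
rewrite (lit_in_res _ _ pv) => /orP [pC|pY].
  by move: ne; rewrite (uCp C (CF UC) pC) eqxx.
by move: cCp; rewrite -(uCp Y YF pY) cY.
Qed.

Lemma keep_uniq2 p Cp : p.1 != x.1 -> uniq_in F p Cp -> Cp != C -> compl x \in Cp ->
  uniq_in G p (res C Cp x).
Proof.
move=> pv [CpF pCp uCp] ne cCp.
split; first exact: (G_res MU UC).
  by rewrite (lit_in_res _ _ pv) pCp orbT.
move=> K KG pK; case/(G_inv MU UC): KG pK => [[KF Kv] pK|[Y /andP[YF cY] ->]].
  by move: Kv; rewrite (uCp K KF pK) (var_in cCp).
rewrite (lit_in_res _ _ pv) => /orP [pC|pY].
  by move: ne; rewrite (uCp C (CF UC) pC) eqxx.
by rewrite (uCp Y YF pY).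
Qed.

Lemma keep_uniq3 p D0 : p.1 != x.1 -> uniq_in F p C -> uniq_in F (compl x) D0 ->
  uniq_in G p (res C D0 x).
Proof.
move=> pv [_ pC uCp] [D0F cD0 uD0].
split; first exact: (G_res MU UC).
  by rewrite (lit_in_res _ _ pv) pC.
move=> K KG pK; case/(G_inv MU UC): KG pK => [[KF Kv] pK|[Y /andP[YF cY] ->]].
  by move: Kv; rewrite (uCp K KF pK) (var_in (xC UC)).
by rewrite (uD0 Y YF cY).
Qed.

Lemma DP2P p X0 K : uniq_in G p X0 ->
  K \in DP p.1 G <->
  [\/ [/\ K \in F, x.1 \notin vars_clause K & p.1 \notin vars_clause K],
      exists Y, [/\ Y \in F, compl x \in Y, K = res C Y x & p.1 \notin vars_clause K],
      exists Y, [/\ Y \in F, x.1 \notin vars_clause Y, compl p \in Y & K = res X0 Y p] |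
      exists Y, [/\ Y \in F, compl x \in Y, compl p \in res C Y x & K = res X0 (res C Y x) p]].
Proof.
move=> UX; have MUG := DP_MU MU UC.
split.
  case/(DPchar K MUG UX) => [[KG Kp]|[Y /andP [YG pY] ->]].
    case/(G_inv MU UC): KG => [[KF Kv]|[Y /andP[YF cY] EK]].
      by constructor 1.
    by constructor 2; exists Y.
  case/(G_inv MU UC): YG pY => [[YF Yv]|[Y' /andP[YF cY] ->]] pY.
    by constructor 3; exists Y.
  by constructor 4; exists Y'.
move=> H; apply/(DPchar K MUG UX); case: H.
- by move=> [KF Kv Kp]; left; split => //; apply: (G_keep MU UC).
- by move=> [Y [YF cY -> Kp]]; left; split => //; apply: (G_res MU UC).
- move=> [Y [YF Yv pY ->]]; right; exists Y => //.
  by rewrite pY andbT; apply: (G_keep MU UC).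
- move=> [Y [YF cY pY ->]]; right; exists (res C Y x) => //.
  by rewrite pY andbT; apply: (G_res MU UC).
Qed.

End Struct2.

Ltac btaut := repeat (match goal with
  | |- context [?z == ?a] => case: (z == a)
  | |- context [?z \in ?A] => case: (z \in A) end); done.

Lemma res2 X Y Z p q : p \notin Z -> compl p \notin Z ->
  res (res X Y p) Z q = (X `|` Y `|` Z) `\` ([fset p; compl p] `|` [fset q; compl q]).
Proof.
move=> h1 h2; apply/fsetP => z; rewrite /res !inE.
case: (eqVneq z p) => [->|_]; first by rewrite (negbTE h1); btaut.
case: (eqVneq z (compl p)) => [->|_]; first by rewrite (negbTE h2); btaut.
btaut.
Qed.

Lemma res_compl X Y p : res X Y (compl p) = res X Y p.
Proof. apply/fsetP => z; rewrite !in_res complK. btaut. Qed.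

Lemma res2C X Y Z p q : p \notin Z -> compl p \notin Z ->
  res (res X Y p) Z q = (X `|` Y `|` Z) `\` ([fset q; compl q] `|` [fset p; compl p]).
Proof. by move=> h1 h2; rewrite res2 // (fsetUC [fset p; compl p]). Qed.

Lemma lit_in_res' t X Y p : t.1 != p.1 -> (t \in res X Y p) = (t \in X) || (t \in Y).
Proof. by move=> h; have [h1 h2] := neq_var h; rewrite in_res h1 h2. Qed.

Lemma novar_res' (q : lit) X Y p : q.1 != p.1 ->
  (q.1 \notin vars_clause (res X Y p)) = (q.1 \notin vars_clause X) && (q.1 \notin vars_clause Y).
Proof.
move=> h; rewrite !novarP !lit_in_res' //.
  by rewrite !negb_or; btaut.
Qed.

Lemma resC X Y p : res X Y p = res Y X p.
Proof. by rewrite /res fsetUC. Qed.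

Lemma res_swap X X' Y p q : p.1 != q.1 -> p \notin X' -> compl p \notin X' -> q \notin X -> compl q \notin X ->
  res X' (res X Y p) q = res X (res X' Y q) p.
Proof.
move=> pq h1 h2 h3 h4.
have [e1 e2] := neq_var pq.
have qp : q.1 != p.1 by rewrite eq_sym.
have [e3 e4] := neq_var qp.
have [e5 e6] := neq_var (t := compl p) pq.
have [e7 e8] := neq_var (t := compl q) qp.
apply/fsetP => z; rewrite !in_res.
have cp := compl_neq p; have cq := compl_neq q.
have cp' : (compl p == p) = false by rewrite eq_sym.
have cq' : (compl q == q) = false by rewrite eq_sym.
case: (eqVneq z p) => [->|_].
  rewrite ?(negbTE h1) ?(negbTE h2) ?(negbTE h3) ?(negbTE h4) ?e1 ?e2 ?e3 ?e4 ?e5 ?e6 ?e7 ?e8 ?cp ?cq ?cp' ?cq'. btaut.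
case: (eqVneq z (compl p)) => [->|_].
  rewrite ?(negbTE h1) ?(negbTE h2) ?(negbTE h3) ?(negbTE h4) ?e1 ?e2 ?e3 ?e4 ?e5 ?e6 ?e7 ?e8 ?cp ?cq ?cp' ?cq'. btaut.
case: (eqVneq z q) => [->|_].
  rewrite ?(negbTE h1) ?(negbTE h2) ?(negbTE h3) ?(negbTE h4) ?e1 ?e2 ?e3 ?e4 ?e5 ?e6 ?e7 ?e8 ?cp ?cq ?cp' ?cq'. btaut.
case: (eqVneq z (compl q)) => [->|_].
  rewrite ?(negbTE h1) ?(negbTE h2) ?(negbTE h3) ?(negbTE h4) ?e1 ?e2 ?e3 ?e4 ?e5 ?e6 ?e7 ?e8 ?cp ?cq ?cp' ?cq'. btaut.
btaut.
Qed.

Lemma compl_var (q : lit) : (compl q).1 = q.1. Proof. by []. Qed.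

Lemma comm_c1_sub F x l C C' K : minimally_unsat F -> uniq_in F x C -> uniq_in F l C' ->
  x.1 != l.1 -> C != C' -> compl x \notin C' -> compl l \notin C ->
  K \in DP l.1 (DP x.1 F) -> K \in DP x.1 (DP l.1 F).
Proof.
move=> MU UC UL xl ne h1 h2.
have lx : l.1 != x.1 by rewrite eq_sym.
have ne' : C' != C by rewrite eq_sym.
have UG1 := keep_uniq1 MU UC lx UL ne' h1.
have UG2 := keep_uniq1 MU UL xl UC ne h2.
have lC : l \notin C.
  by apply/negP => lC; move: ne; case: UL => _ _ h; rewrite (h C (CF UC) lC) eqxx.
have xC' : x \notin C'.
  by apply/negP => xC'; move: ne; case: UC => _ _ h; rewrite (h C' (CF UL) xC') eqxx.
have cxl : (compl x).1 != l.1 by [].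
have clx : (compl l).1 != x.1 by [].
move/(DP2P MU UC K UG1) => H; apply/(DP2P MU UL K UG2).
case: H.
- by move=> [KF Kv Kl]; constructor 1.
- move=> [Y [YF cY -> Kl]]; constructor 3; exists Y; split => //.
  by move: Kl; rewrite novar_res' // => /andP [].
- move=> [Y [YF Yv cY ->]]; constructor 2; exists Y; split => //.
  by rewrite novar_res' // Yv novarP xC' h1.
- move=> [Y [YF cY clY ->]]; constructor 4; exists Y; split => //.
  + by move: clY; rewrite lit_in_res' // (negbTE h2).
  + by rewrite lit_in_res' // cY orbT.
  by rewrite res_swap // ?xC'.
Qed.

Lemma comm_c1 F x l C C' : minimally_unsat F -> uniq_in F x C -> uniq_in F l C' ->
  x.1 != l.1 -> C != C' -> compl x \notin C' -> compl l \notin C ->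
  DP l.1 (DP x.1 F) = DP x.1 (DP l.1 F).
Proof.
move=> MU UC UL xl ne h1 h2; apply/fsetP => K; apply/idP/idP.
  exact: (comm_c1_sub MU UC UL xl ne h1 h2).
have lx : l.1 != x.1 by rewrite eq_sym.
have ne' : C' != C by rewrite eq_sym.
exact: (comm_c1_sub MU UL UC lx ne' h2 h1).
Qed.

Lemma eqE1 C C' Y x l : x \notin Y -> compl x \notin Y -> l \notin C -> compl l \notin C ->
  res (res C C' x) Y l = res C (res C' Y l) x.
Proof.
move=> h1 h2 h3 h4; rewrite res2 // (resC C) res2 //.
apply/fsetP => z; rewrite !inE. btaut.
Qed.

Lemma eqE2 C C' Y x l : l \notin C -> compl l \notin C ->
  res (res C C' x) (res C Y x) l = res C (res C' Y l) x.
Proof.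
move=> h3 h4; rewrite res2 ?in_res ?eqxx ?andbF // (resC C (res C' Y l)) res2 //.
apply/fsetP => z; rewrite /res !inE. btaut.
Qed.

Lemma comm_b F x l C C' : minimally_unsat F -> uniq_in F x C -> uniq_in F l C' ->
  x.1 != l.1 -> C != C' -> compl x \in C' ->
  DP l.1 (DP x.1 F) = DP x.1 (DP l.1 F).
Proof.
move=> MU UC UL xl ne cC'.
have lx : l.1 != x.1 by rewrite eq_sym.
have ne' : C' != C by rewrite eq_sym.
have [C'F lC' uL] := UL.
have [CF xC uC] := UC.
have h2 : compl l \notin C.
  apply/negP => h; have := noclash MU UC C'F cC' h; rewrite complK => /(_ lC') e.
  by move: xl; rewrite -e compl_var eqxx.
have lC : l \notin C by apply/negP => lC; move: ne; rewrite (uL C CF lC) eqxx.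
have UG1 := keep_uniq2 MU UC lx UL ne' cC'.
have UG2 := keep_uniq1 MU UL xl UC ne h2.
have cxl : (compl x).1 != l.1 by [].
have clx : (compl l).1 != x.1 by [].
have wf := MU_wf MU.
apply/fsetP => K; apply/idP/idP.
  move/(DP2P MU UC K UG1) => H; apply/(DP2P MU UL K UG2).
  case: H.
  - by move=> [KF Kv Kl]; constructor 1.
  - move=> [Y [YF cY -> Kl]]; constructor 3; exists Y; split => //.
    by move: Kl; rewrite novar_res' // => /andP [].
  - move=> [Y [YF Yv cY ->]]; constructor 4; exists Y; split => //.
      by rewrite lit_in_res' // cC'.
    by move: Yv; rewrite novarP => /andP [h5 h6]; rewrite eqE1.
  - move=> [Y [YF cY clY ->]]; constructor 4; exists Y; split => //.
    + by move: clY; rewrite lit_in_res' // (negbTE h2).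
    + by rewrite lit_in_res' // cC'.
    by rewrite eqE2.
move/(DP2P MU UL K UG2) => H; apply/(DP2P MU UC K UG1).
case: H.
- by move=> [KF Kv Kl]; constructor 1.
- move=> [Y [YF cY -> Kv]]; exfalso; move: Kv.
  by rewrite novarP !lit_in_res' // cC' /= andbF.
- move=> [Y [YF Yv cY ->]]; constructor 2; exists Y; split => //.
  by rewrite novar_res' // Yv novarP lC h2.
- move=> [Y [YF clY cY ->]].
  case: (boolP (x.1 \in vars_clause Y)) => [/var_p_lit [xY|cxY]|Yv].
  + by move: h2; rewrite -(uC Y YF xY) clY.
  + constructor 4; exists Y; split => //.
      by rewrite lit_in_res' // clY orbT.
    by rewrite eqE2.
  + constructor 3; exists Y; split => //.
    by move: Yv; rewrite novarP => /andP [h5 h6]; rewrite eqE1.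
Qed.

Lemma eqE3 C D0 Y x l : x \notin Y -> compl x \notin Y -> l \notin D0 -> compl l \notin D0 ->
  res (res C D0 x) Y l = res D0 (res C Y l) (compl x).
Proof.
move=> h1 h2 h3 h4; rewrite res_compl res2 // (resC D0) res2 //.
apply/fsetP => z; rewrite !inE. btaut.
Qed.

Lemma comm_a F x l C D0 : minimally_unsat F -> uniq_in F x C -> uniq_in F l C ->
  x.1 != l.1 -> uniq_in F (compl x) D0 ->
  DP l.1 (DP x.1 F) = DP x.1 (DP l.1 F).
Proof.
move=> MU UC UL xl UD.
have lx : l.1 != x.1 by rewrite eq_sym.
have [CF xC uC] := UC; have [_ lC uL] := UL; have [D0F cD0 uD] := UD.
have wf := MU_wf MU.
have ne : D0 != C by apply/eqP => e; move: (wf _ _ CF xC); rewrite -e cD0.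
have h2 : compl l \notin D0.
  apply/negP => h; have e := noclash MU UC D0F cD0 lC h.
  by move: xl; rewrite -e eqxx.
have h1 : l \notin D0 by apply/negP => h; move: ne; rewrite (uL D0 D0F h) eqxx.
have cxl : (compl x).1 != l.1 by [].
have UG1 := keep_uniq3 MU UC lx UL UD.
have UG2 := keep_uniq1 MU UL cxl UD ne h2.
have clC : compl l \notin C by apply: wf.
apply/fsetP => K; apply/idP/idP.
  move/(DP2P MU UC K UG1) => H; apply/(DP2P MU UL K UG2).
  case: H.
  - by move=> [KF Kv Kl]; constructor 1.
  - move=> [Y [YF cY -> Kl]]; exfalso; move: Kl.
    by rewrite (uD Y YF cY) novarP !lit_in_res' // lC.
  - move=> [Y [YF Yv cY ->]]; constructor 4; exists Y; split => //.
      by rewrite complK lit_in_res' // xC.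
    by move: Yv; rewrite novarP => /andP [h5 h6]; rewrite eqE3.
  - move=> [Y [YF cY clY ->]]; exfalso; move: clY.
    by rewrite (uD Y YF cY) lit_in_res' // (negbTE clC) (negbTE h2).
move/(DP2P MU UL K UG2) => H; apply/(DP2P MU UC K UG1).
case: H.
- by move=> [KF Kv Kl]; constructor 1.
- move=> [Y [YF cY -> Kv]]; exfalso; move: Kv.
  by rewrite novarP complK !lit_in_res' // xC /= andbF.
- move=> [Y [YF Yv cY ->]]; exfalso; move: Yv.
  by rewrite complK in cY; rewrite (uC Y YF cY) novarP lC.
- move=> [Y [YF clY cY ->]].
  have Yv : x.1 \notin vars_clause Y.
    rewrite novarP; apply/andP; split; apply/negP => h.
      by move: clC; rewrite -(uC Y YF h) clY.
    by move: h2; rewrite -(uD Y YF h) clY.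
  constructor 3; exists Y; split => //.
  by move: Yv; rewrite novarP => /andP [h5 h6]; rewrite eqE3.
Qed.

Lemma comm F x l C C' : minimally_unsat F -> uniq_in F x C -> uniq_in F l C' ->
  x.1 != l.1 ->
  [\/ C != C', exists D0, uniq_in F (compl x) D0 | exists D0, uniq_in F (compl l) D0] ->
  DP l.1 (DP x.1 F) = DP x.1 (DP l.1 F).
Proof.
move=> MU UC UL xl H.
have lx : l.1 != x.1 by rewrite eq_sym.
case: (eqVneq C C') => [e|ne].
  subst C'; case: H => [|[D0 UD]|[D0 UD]]; first by rewrite eqxx.
    exact: (comm_a MU UC UL xl UD).
  by rewrite (comm_a MU UL UC lx UD).
have ne' : C' != C by rewrite eq_sym.
case: (boolP (compl x \in C')) => h1; first exact: (comm_b MU UC UL xl ne h1).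
case: (boolP (compl l \in C)) => h2; first by rewrite (comm_b MU UL UC lx ne' h2).
exact: (comm_c1 MU UC UL xl ne h1 h2).
Qed.

Lemma sing_after F p X q Y : minimally_unsat F -> uniq_in F p X ->
  (exists2 K, K \in F & compl p \in K) -> uniq_in F q Y -> (exists2 K, K \in F & compl q \in K) ->
  p.1 != q.1 ->
  [\/ X != Y, exists D0, uniq_in F (compl p) D0 | exists D0, uniq_in F (compl q) D0] ->
  singular (DP p.1 F) q.1.
Proof.
move=> MU UX [Dp DpF cDp] UY [Eq EqF cEq] pq H.
have qp : q.1 != p.1 by rewrite eq_sym.
have wf := MU_wf MU.
have [XF pX uX] := UX; have [YF qY uY] := UY.
case: (eqVneq X Y) => [e|ne]; last first.
  apply/singularP; exists q; split => //.
  apply: (keep_sing MU UX qp UY) => //; [by rewrite eq_sym|by exists Dp|by exists Eq].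
subst Y.
have EqX : Eq != X by apply/eqP => e; move: (wf _ _ XF qY); rewrite -e cEq.
have cpEq : compl p \notin Eq.
  apply/negP => h; have e := noclash MU UX EqF h qY cEq.
  by move: pq; rewrite e eqxx.
have pEq : p \notin Eq by apply/negP => h; move: EqX; rewrite (uX Eq EqF h) eqxx.
case: H => [|[D0 UD]|[D0 UD]]; first by rewrite eqxx.
  apply/singularP; exists q; split => //; split.
    by exists (res X D0 p); apply: (keep_uniq3 MU UX qp UY UD).
  by exists Eq => //; apply: (G_keep MU UX) => //; rewrite novarP pEq cpEq.
apply/singularP; exists (compl q); split => //; split.
  have [D0F cD0 uD] := UD.
  have ne : D0 != X by apply/eqP => e; move: (wf _ _ XF qY); rewrite -e cD0.
  have cp : compl p \notin D0.
    apply/negP => h; have e := noclash MU UX D0F h qY cD0.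
    by move: pq; rewrite e eqxx.
  by exists D0; apply: (keep_uniq1 MU UX) => //.
exists (res X Dp p); first exact: (G_res MU UX).
by rewrite complK lit_in_res' // qY.
Qed.

Lemma other_clause (F : clauseset) (p : lit) (K1 : clause) : K1 \in F -> p \in K1 -> ~ (exists D0, uniq_in F p D0) ->
  exists K2, [/\ K2 \in F, p \in K2 & K1 != K2].
Proof.
move=> K1F pK1 NU.
apply: NNPP => H; apply: NU; exists K1; split => // K KF pK.
apply: NNPP => ne; apply: H; exists K; split => //.
by apply/eqP => e; apply: ne.
Qed.

Lemma reach_MU F G : minimally_unsat F -> sDP_reach F G -> minimally_unsat G.
Proof.
move=> MU R; elim: R MU => // F0 v G0 MU0 S _ IH _; apply: IH.
have /singularP [p [<- [[X UX] _]]] := S.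
exact: (DP_MU MU0 UX).
Qed.

Lemma reach_ns F N : nonsingular F -> sDP_reach F N -> N = F.
Proof. by move=> NS R; case: R NS => // F0 v G0 _ S _ NS; case: (NS v). Qed.

Lemma nvars_DP F p X : minimally_unsat F -> uniq_in F p X -> (exists2 K, K \in F & compl p \in K) ->
  nvars (DP p.1 F) = (nvars F).-1.
Proof.
move=> MU UX [D DF cD]; rewrite /nvars (vars_G MU UX DF cD).
have pv : p.1 \in vars F by apply/varsP; exists X; case: UX => // _ h _; apply: var_in.
by rewrite (cardfsD1 p.1 (vars F)) pv.
Qed.

Lemma nvars_pos F p X : uniq_in F p X -> (0 < nvars F)%N.
Proof.
move=> [XF pX _]; rewrite /nvars cardfs_gt0; apply/fset0Pn; exists p.1.
by apply/varsP; exists X => //; apply: var_in.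
Qed.

Lemma exists_NF k F : (nvars F < k)%N -> minimally_unsat F ->
  exists N, sDP_reach F N /\ nonsingular N.
Proof.
elim: k F => // k IH F lt MU.
case: (classic (nonsingular F)) => NS; first by exists F; split => //; constructor.
have [v S] : exists v, singular F v.
  by apply: NNPP => H; apply: NS => v Sv; apply: H; exists v.
have /singularP [p [ev [[X UX] ex]]] := S.
have MUG := DP_MU MU UX.
have h2 := nvars_DP MU UX ex; rewrite ev in h2 MUG; have h1 := nvars_pos UX.
have lt' : (nvars (DP v F) < k)%N by rewrite h2; move: lt h1; case: (nvars F).
have [N [R NN]] := IH (DP v F) lt' MUG.
by exists N; split => //; apply: (sDP_step MU S).
Qed.

Lemma reach_inv F N : sDP_reach F N ->
  N = F \/ exists v, [/\ minimally_unsat F, singular F v & sDP_reach (DP v F) N].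
Proof. by case => [F0|F0 v G MU S R]; [left|right; exists v]. Qed.

Lemma nvars_lt F v : minimally_unsat F -> singular F v -> (nvars (DP v F) < nvars F)%N.
Proof.
move=> MU /singularP [p [<- [[X UX] ex]]].
rewrite (nvars_DP MU UX ex); have := nvars_pos UX; by case: (nvars F).
Qed.

Lemma transferB F p X D1 D2 r : minimally_unsat F -> uniq_in F p X ->
  D1 \in F -> D2 \in F -> compl p \in D1 -> compl p \in D2 -> D1 != D2 ->
  r.1 != p.1 -> sing_lit (DP p.1 F) r ->
  exists Cr, [/\ uniq_in F r Cr, Cr != X & exists2 K, K \in F & compl r \in K].
Proof.
move=> MU UX D1F D2F c1 c2 ne rp SL.
have rX : r \notin X.
  apply/negP => rX; have := two_in_G MU UX rX rp D1F D2F c1 c2 ne.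
  by case: SL => [/ldeg1P ->].
exact: (back_sing MU UX rp rX SL).
Qed.

Lemma E_in_G F p X q E : minimally_unsat F -> uniq_in F p X -> q \in X -> p.1 != q.1 ->
  E \in F -> compl q \in E -> E \in DP p.1 F.
Proof.
move=> MU UX qX pq EF cE; have [XF pX uX] := UX.
apply: (G_keep MU UX) => //; rewrite novarP; apply/andP; split; apply/negP => h.
  by move: (MU_wf MU XF qX); rewrite -(uX E EF h) cE.
have e := noclash MU UX EF h qX cE.
by move: pq; rewrite e eqxx.
Qed.

Lemma DP_MU' F v : minimally_unsat F -> singular F v -> minimally_unsat (DP v F).
Proof. move=> MU /singularP [p [<- [[X UX] _]]]; exact: (DP_MU MU UX). Qed.

Theorem main_conf k : forall F, (nvars F < k)%N -> minimally_unsat F ->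
  forall N1 N2, sDP_reach F N1 -> nonsingular N1 -> sDP_reach F N2 -> nonsingular N2 ->
  nvars N1 = nvars N2.
Proof.
elim: k => // k IH F lt MU N1 N2 R1 NS1 R2 NS2.
have IHs : forall G, (nvars G < nvars F)%N -> minimally_unsat G ->
    forall N1 N2, sDP_reach G N1 -> nonsingular N1 -> sDP_reach G N2 -> nonsingular N2 ->
    nvars N1 = nvars N2.
  move=> G h; apply: IH; exact: leq_trans h lt.
have NFs : forall G, minimally_unsat G -> exists N, sDP_reach G N /\ nonsingular N.
  by move=> G; apply: (exists_NF (k := (nvars G).+1)).
case: (reach_inv R1) => [E1|[v [_ S1 R1']]].
  subst N1; case: (reach_inv R2) => [->//|[v [_ S _]]]; by case: (NS1 v).
case: (reach_inv R2) => [E2|[w [_ S2 R2']]].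
  by subst N2; case: (NS2 v).
have [p [ev [[X UX] exp]]] := (iffLR (singularP F v)) S1.
have [q [ew [[Y UY] exq]]] := (iffLR (singularP F w)) S2.
subst v w.
have MU1 := DP_MU MU UX; have MU2 := DP_MU MU UY.
have lt1 := nvars_lt MU S1; have lt2 := nvars_lt MU S2.
case: (eqVneq p.1 q.1) => [evw|pq].
  by rewrite -evw in R2'; exact: (IHs _ lt1 MU1 _ _ R1' NS1 R2' NS2).
have qp : q.1 != p.1 by rewrite eq_sym.
case: (classic [\/ X != Y, exists D0, uniq_in F (compl p) D0 | exists D0, uniq_in F (compl q) D0])
  => [HA|HB].
  have sw := sing_after MU UX exp UY exq pq HA.
  have HA' : [\/ Y != X, exists D0, uniq_in F (compl q) D0 | exists D0, uniq_in F (compl p) D0].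
    by case: HA => [h|h|h]; [constructor 1; rewrite eq_sym|constructor 3|constructor 2].
  have sv := sing_after MU UY exq UX exp qp HA'.
  have Ec := comm MU UX UY pq HA.
  have MUH := DP_MU' MU1 sw.
  have [N [RN NSN]] := NFs _ MUH.
  have e1 := IHs _ lt1 MU1 _ _ R1' NS1 (sDP_step MU1 sw RN) NSN.
  rewrite Ec in RN.
  have e2 := IHs _ lt2 MU2 _ _ R2' NS2 (sDP_step MU2 sv RN) NSN.
  by rewrite e1 e2.
have eXY : X = Y by apply: NNPP => h; apply: HB; constructor 1; apply/eqP.
subst Y.
have NUp : ~ exists D0, uniq_in F (compl p) D0 by move=> h; apply: HB; constructor 2.
have NUq : ~ exists D0, uniq_in F (compl q) D0 by move=> h; apply: HB; constructor 3.
have [D1 D1F c1] := exp; have [D2 [D2F c2 neD]] := other_clause D1F c1 NUp.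
have [E1 E1F e1] := exq; have [E2 [E2F e2 neE]] := other_clause E1F e1 NUq.
have [XF pX _] := UX; have [_ qX _] := UY.
have nsw1 : ~ singular (DP p.1 F) q.1.
  apply: not_singular2.
    exact: (two_in_G MU UX qX qp D1F D2F c1 c2 neD).
  apply: (ldeg_ge2 (K1 := E1) (K2 := E2)) => //; exact: (E_in_G MU UX qX pq).
have nsv2 : ~ singular (DP q.1 F) p.1.
  apply: not_singular2.
    exact: (two_in_G MU UY pX pq E1F E2F e1 e2 neE).
  apply: (ldeg_ge2 (K1 := D1) (K2 := D2)) => //; exact: (E_in_G MU UY pX qp).
have nsv1 : ~ singular (DP p.1 F) p.1 by apply: not_singular0 => K; apply: (G_novar MU UX).
have nsw2 : ~ singular (DP q.1 F) q.1 by apply: not_singular0 => K; apply: (G_novar MU UY).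
case: (classic (nonsingular (DP p.1 F))) => NSG1.
  have -> := reach_ns NSG1 R1'.
  have NSG2 : nonsingular (DP q.1 F).
    move=> u /singularP [r [eu SL]].
    have ru : r.1 != q.1 by apply/eqP => e; apply: nsw2; apply/singularP; exists r.
    have rv : r.1 != p.1 by apply/eqP => e; apply: nsv2; apply/singularP; exists r.
    have [Cr [UCr neC exr]] := transferB MU UY E1F E2F e1 e2 neE ru SL.
    apply: (NSG1 u); apply/singularP; exists r; split => //.
    apply: (keep_sing MU UX rv UCr neC) => //; by exists D1.
  have -> := reach_ns NSG2 R2'.
  by rewrite (nvars_DP MU UX) ?(nvars_DP MU UY) //; exists D1.
have [u Su] : exists u, singular (DP p.1 F) u.
  by apply: NNPP => H; apply: NSG1 => u Su; apply: H; exists u.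
have /singularP [r [eu SL]] := Su.
have ru : r.1 != q.1 by apply/eqP => e; apply: nsw1; rewrite -e eu.
have rv : r.1 != p.1 by apply/eqP => e; apply: nsv1; apply/singularP; exists r.
have [Cr [UCr neC exr]] := transferB MU UX D1F D2F c1 c2 neD rv SL.
have neC' : X != Cr by rewrite eq_sym.
have MUs := DP_MU MU UCr.
have pr : p.1 != r.1 by rewrite eq_sym.
have qr : q.1 != r.1 by rewrite eq_sym.
have svs : singular (DP r.1 F) p.1.
  apply/singularP; exists p; split => //.
  exact: (keep_sing MU UCr pr UX neC' exr (ex_intro2 _ _ D1 D1F c1)).
have sws : singular (DP r.1 F) q.1.
  apply/singularP; exists q; split => //.
  exact: (keep_sing MU UCr qr UY neC' exr (ex_intro2 _ _ E1 E1F e1)).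
have su2 : singular (DP q.1 F) r.1.
  apply/singularP; exists r; split => //.
  exact: (keep_sing MU UY ru UCr neC (ex_intro2 _ _ E1 E1F e1) exr).
have su1 : singular (DP p.1 F) r.1 by rewrite eu.
have hC : [\/ X != Cr, exists D0, uniq_in F (compl p) D0 | exists D0, uniq_in F (compl r) D0].
  by constructor 1.
have Ec1 := comm MU UX UCr pr hC.
have hC2 : [\/ X != Cr, exists D0, uniq_in F (compl q) D0 | exists D0, uniq_in F (compl r) D0].
  by constructor 1.
have Ec2 := comm MU UY UCr qr hC2.
have sr : singular F r.1 by apply/singularP; exists r; split => //; split => //; exists Cr.
have lts := nvars_lt MU sr.
have [M1 [RM1 NSM1]] := NFs _ (DP_MU' MU1 su1).
have [M2 [RM2 NSM2]] := NFs _ (DP_MU' MU2 su2).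
have eA := IHs _ lt1 MU1 _ _ R1' NS1 (sDP_step MU1 su1 RM1) NSM1.
have eB := IHs _ lt2 MU2 _ _ R2' NS2 (sDP_step MU2 su2 RM2) NSM2.
rewrite Ec1 in RM1; rewrite Ec2 in RM2.
have eC := IHs _ lts MUs _ _ (sDP_step MUs svs RM1) NSM1 (sDP_step MUs sws RM2) NSM2.
by rewrite eA eB eC.
Qed.

Unset Implicit Arguments.

Theorem corollary64 (F F' F'' : clauseset) :
  wf_clauseset F -> minimally_unsat F ->
  in_sDP F F' -> in_sDP F F'' -> nvars F' = nvars F''.
Proof.
move=> _ MU [R1 [NS1 _]] [R2 [NS2 _]].
exact: (main_conf (k := (nvars F).+1) (leqnn _) MU R1 NS1 R2 NS2).
Qed.
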